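(* Let $\mathcal{H}$ be a finite-dimensional Hilbert space and let $\mathcal{A}$ be a deterministic map sending every unitary $U$ on $\mathcal{H}$ to an operator $\mathcal{A}(U)$ with $\|\mathcal{A}(U)\|_\infty=1$, which is $K$-Lipschitz in the sense that $\|\mathcal{A}(U_1)-\mathcal{A}(U_2)\|_\infty\le K\|U_1-U_2\|_\infty$ for all unitaries $U_1,U_2$. Let $|\psi\rangle,|\varphi\rangle\in\mathcal{H}$ be fixed unit vectors. Then the function $$F(U):=F\big(U|\psi\rangle,\mathcal{A}(U)|\varphi\rangle\big)=\big|\langle\psi|U^\dagger\mathcal{A}(U)|\varphi\rangle\big|^2$$ is $(2+2K)$-Lipschitz in $U$: $|F(U_1)-F(U_2)|\le(2+2K)\|U_1-U_2\|_2$ for all unitaries $U_1,U_2$, where $\|X\|_2=\sqrt{\mathrm{tr}X^\dagger X}$.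
   Context: $\|\cdot\|_\infty$ denotes the operator norm. In this part of the paper, operators output by the map are taken to be exactly norm-preserving, i.e. $\|\mathcal{A}(U)\|_\infty=1$. *)

(* Defs.v *)
From HB Require Import structures.
From mathcomp Require Import all_boot all_order all_algebra.
From mathcomp Require Import complex.
From mathcomp Require Import classical_sets reals.
Set Implicit Arguments. Unset Strict Implicit. Unset Printing Implicit Defensive.
Import Order.TTheory GRing.Theory Num.Theory.
Local Open Scope ring_scope.
Local Open Scope classical_set_scope.

(* Hilbert space H = C^n with C = R[i], R a real field (realType). *)

Definition adjmx (R : realType) m n (A : 'M[R[i]]_(m, n)) : 'M[R[i]]_(n, m) :=
  (map_mx (@conjc R) A)^T.

Definition vnorm (R : realType) n (v : 'cV[R[i]]_n) : R :=
  Num.sqrt (complex.Re ((adjmx v *m v) 0 0)).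

Definition opnorm (R : realType) n (A : 'M[R[i]]_n) : R :=
  sup [set vnorm (A *m v) | v in [set v : 'cV[R[i]]_n | vnorm v = 1]].

Definition hsnorm (R : realType) n (X : 'M[R[i]]_n) : R :=
  Num.sqrt (complex.Re (\tr (adjmx X *m X))).

Definition unitary (R : realType) n (U : 'M[R[i]]_n) : Prop :=
  adjmx U *m U = 1%:M.

Definition fid (R : realType) n (A : 'M[R[i]]_n -> 'M[R[i]]_n)
  (psi phi : 'cV[R[i]]_n) (U : 'M[R[i]]_n) : R :=
  ComplexField.Normc.normc ((adjmx psi *m adjmx U *m A U *m phi) 0 0) ^+ 2.

(* Main.v *)
Require Import Defs.
From HB Require Import structures.
From mathcomp Require Import all_boot all_order all_algebra.
From mathcomp Require Import complex.
From mathcomp Require Import classical_sets reals.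
From mathcomp Require Import ring lra.
Import Order.TTheory GRing.Theory Num.Theory.
Local Open Scope ring_scope.
Import ComplexField.Normc.
Lemma cs_real {R : realType} {n} (a b : 'I_n -> R) :
  (\sum_i a i * b i) ^+ 2 <= (\sum_i a i ^+ 2) * (\sum_i b i ^+ 2).
Proof.
set P := (\sum_i a i ^+ 2) * (\sum_i b i ^+ 2).
set Q := (\sum_i a i * b i) ^+ 2.
have h1 : P = \sum_i \sum_j a i ^+ 2 * b j ^+ 2 by rewrite /P big_distrlr.
have h2 : Q = \sum_i \sum_j (a i * b i) * (a j * b j) by rewrite /Q expr2 big_distrlr.
have h3 : \sum_i \sum_j a j ^+ 2 * b i ^+ 2 = \sum_i \sum_j a i ^+ 2 * b j ^+ 2.
  by rewrite exchange_big.
have h4 : \sum_i \sum_j (a i * b j - a j * b i) ^+ 2 =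
  \sum_i \sum_j a i ^+ 2 * b j ^+ 2 + \sum_i \sum_j a j ^+ 2 * b i ^+ 2
  - \sum_i \sum_j 2 * ((a i * b i) * (a j * b j)).
  rewrite -big_split -sumrB; apply: eq_bigr => i _.
  rewrite -big_split -sumrB; apply: eq_bigr => j _ /=; ring.
have h5 : \sum_i \sum_j 2 * ((a i * b i) * (a j * b j)) = 2 * Q.
  rewrite h2 mulr_sumr; apply: eq_bigr => i _; by rewrite mulr_sumr.
have H : 0 <= \sum_i \sum_j (a i * b j - a j * b i) ^+ 2.
  by apply: sumr_ge0 => i _; apply: sumr_ge0 => j _; exact: sqr_ge0.
rewrite h4 h3 h5 -h1 in H.
lra.
Qed.

Section S.
Context {R : realType}.
Local Notation C := R[i].

Lemma normc_ge0 (x : C) : 0 <= normc x.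
Proof. by case: x => a b /=; rewrite sqrtr_ge0. Qed.

Lemma normc_conj (x : C) : normc (conjc x) = normc x.
Proof. by case: x => a b /=; rewrite sqrrN. Qed.

Lemma Re_conj_mul (x : C) : complex.Re (conjc x * x) = normc x ^+ 2.
Proof. case: x => a b /=; rewrite sqr_sqrtr ?addr_ge0 ?sqr_ge0 //. rewrite !expr2. ring. Qed.

Lemma normc_sum {I : Type} {r : seq I} {P : pred I} (F : I -> C) :
  normc (\sum_(i <- r | P i) F i) <= \sum_(i <- r | P i) normc (F i).
Proof.
apply: (big_ind2 (fun x y => normc x <= y)).
- by rewrite normc0.
- move=> x1 y1 x2 y2 h1 h2. apply: le_trans (le_normcD _ _) _. exact: lerD.
- by [].
Qed.

Lemma Re_sum {I : Type} {r : seq I} {P : pred I} (F : I -> C) :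
  complex.Re (\sum_(i <- r | P i) F i) = \sum_(i <- r | P i) complex.Re (F i).
Proof.
apply: (big_ind2 (fun x y => complex.Re x = y)) => //.
by move=> x1 y1 x2 y2 <- <-; case: x1; case: x2.
Qed.

Lemma cs_c {n} (x y : 'I_n -> C) :
  normc (\sum_i x i * y i) ^+ 2 <=
  (\sum_i normc (x i) ^+ 2) * (\sum_i normc (y i) ^+ 2).
Proof.
apply: le_trans (cs_real (fun i => normc (x i)) (fun i => normc (y i))).
have h := @normc_sum _ (index_enum 'I_n) xpredT (fun i => x i * y i).
rewrite !expr2; apply: ler_pM; rewrite ?normc_ge0 //;
  by apply: le_trans h _; apply: ler_sum => i _; rewrite normcM.
Qed.


Definition nr {n} (v : 'cV[C]_n) := \sum_i normc (v i 0) ^+ 2.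

Lemma nr_ge0 {n} (v : 'cV[C]_n) : 0 <= nr v.
Proof. by apply: sumr_ge0 => i _; exact: sqr_ge0. Qed.

Lemma dotE n (u w : 'cV[C]_n) :
  (adjmx u *m w) 0 0 = \sum_i conjc (u i 0) * w i 0.
Proof. by rewrite !mxE; apply: eq_bigr => i _; rewrite !mxE. Qed.

Lemma vnormE n (v : 'cV[C]_n) : vnorm v = Num.sqrt (nr v).
Proof.
by rewrite /vnorm dotE Re_sum; congr Num.sqrt; apply: eq_bigr => i _; rewrite Re_conj_mul.
Qed.

Lemma vnorm_ge0 {n} (v : 'cV[C]_n) : 0 <= vnorm v.
Proof. exact: sqrtr_ge0. Qed.

Lemma cs_dot {n} (u w : 'cV[C]_n) :
  normc ((adjmx u *m w) 0 0) <= vnorm u * vnorm w.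
Proof.
rewrite dotE !vnormE -sqrtrM ?nr_ge0 //.
rewrite -(ger0_norm (normc_ge0 (\sum_i conjc (u i 0) * w i 0))) -sqrtr_sqr.
apply: ler_wsqrtr.
apply: le_trans (cs_c (fun i => conjc (u i 0)) (fun i => w i 0)) _.
rewrite /nr; under eq_bigr do rewrite normc_conj.
by [].
Qed.

Lemma adjmx_mul {m n p} (A : 'M[C]_(m, n)) (B : 'M[C]_(n, p)) :
  adjmx (A *m B) = adjmx B *m adjmx A.
Proof. by rewrite /adjmx map_mxM trmx_mul. Qed.

Lemma adjmxB {m n} (A B : 'M[C]_(m, n)) : adjmx (A - B) = adjmx A - adjmx B.
Proof. by rewrite /adjmx map_mxB linearB. Qed.

Lemma vnorm_unitary {n} (U : 'M[C]_n) (v : 'cV[C]_n) :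
  unitary U -> vnorm (U *m v) = vnorm v.
Proof.
move=> hU; rewrite /vnorm adjmx_mul mulmxA -(mulmxA (adjmx v)) hU mulmx1 //.
Qed.

Lemma nr_unit {n} {v : 'cV[C]_n} : vnorm v = 1 -> nr v = 1.
Proof. by rewrite vnormE => h; rewrite -(sqr_sqrtr (nr_ge0 v)) h expr1n. Qed.

Lemma hs2E n (X : 'M[C]_n) :
  complex.Re (\tr (adjmx X *m X)) = \sum_j \sum_i normc (X i j) ^+ 2.
Proof.
rewrite /mxtrace Re_sum; apply: eq_bigr => j _.
rewrite mxE Re_sum; apply: eq_bigr => i _.
by rewrite !mxE Re_conj_mul.
Qed.

Lemma vnorm_le_hs {n} (X : 'M[C]_n) (v : 'cV[C]_n) :
  vnorm v = 1 -> vnorm (X *m v) <= hsnorm X.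
Proof.
move=> hv; rewrite vnormE /hsnorm hs2E; apply: ler_wsqrtr.
rewrite /nr exchange_big /=; apply: ler_sum => i _.
rewrite mxE; apply: le_trans (cs_c (fun j => X i j) (fun j => v j 0)) _.
by have := nr_unit hv; rewrite /nr => ->; rewrite mulr1.
Qed.

Lemma vnorm_le_op {n} (X : 'M[C]_n) (v : 'cV[C]_n) :
  vnorm v = 1 -> vnorm (X *m v) <= opnorm X.
Proof.
move=> hv; apply: (ub_le_sup).
  exists (hsnorm X) => _ [w hw <-]; exact: vnorm_le_hs.
by exists v.
Qed.

Lemma op_le_hs {n} (X : 'M[C]_n) (v : 'cV[C]_n) :
  vnorm v = 1 -> opnorm X <= hsnorm X.
Proof.
move=> hv; apply: ge_sup; first by exists (vnorm (X *m v)), v.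
move=> _ [w hw <-]; exact: vnorm_le_hs.
Qed.

Lemma op_ge0 {n} (X : 'M[C]_n) (v : 'cV[C]_n) :
  vnorm v = 1 -> 0 <= opnorm X.
Proof. move=> hv; have h := vnorm_le_op X v hv. apply: le_trans h; exact: vnorm_ge0. Qed.

Lemma mxsubE {m n} (X Y : 'M[C]_(m, n)) i j : (X - Y) i j = X i j - Y i j.
Proof. by rewrite !mxE. Qed.

Lemma mxaddE {m n} (X Y : 'M[C]_(m, n)) i j : (X + Y) i j = X i j + Y i j.
Proof. by rewrite !mxE. Qed.

Lemma adjmx_scalar {n} (c : C) : adjmx (c%:M : 'M[C]_n) = (conjc c)%:M.
Proof. by rewrite /adjmx map_scalar_mx tr_scalar_mx. Qed.

Lemma unitary_N1 {n} : unitary ((-1)%:M : 'M[C]_n).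
Proof.
rewrite /unitary adjmx_scalar mul_scalar_mx scale_scalar_mx.
congr scalar_mx. by rewrite rmorphN rmorph1 mulrNN mulr1.
Qed.

Lemma unitary_1 {n} : unitary (1%:M : 'M[C]_n).
Proof.
by rewrite /unitary adjmx_scalar mul_scalar_mx scale_scalar_mx rmorph1 mulr1.
Qed.

Lemma vnorm_double {n} (v : 'cV[C]_n) : vnorm v = 1 -> 0 < vnorm (v + v).
Proof.
move=> hv; rewrite vnormE sqrtr_gt0.
have -> : nr (v + v) = 4 * nr v.
  rewrite /nr mulr_sumr; apply: eq_bigr => i _.
  rewrite mxE -mulr2n normcMn. rewrite -mulr_natr. ring.
by rewrite (nr_unit hv) mulr1.
Qed.
End S.

Theorem lemma2 (R : realType) (n : nat) (A : 'M[R[i]]_n -> 'M[R[i]]_n) (K : R)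
  (psi phi : 'cV[R[i]]_n)
  (hA1 : forall U, unitary U -> opnorm (A U) = 1)
  (hLip : forall U1 U2, unitary U1 -> unitary U2 ->
     opnorm (A U1 - A U2) <= K * opnorm (U1 - U2))
  (hpsi : vnorm psi = 1) (hphi : vnorm phi = 1) :
  forall U1 U2, unitary U1 -> unitary U2 ->
    `| fid A psi phi U1 - fid A psi phi U2 | <= (2 + 2 * K) * hsnorm (U1 - U2).
Proof.
move=> U1 U2 hU1 hU2.
have hK : 0 <= K.
  have h := hLip _ _ (@unitary_1 _ n) (@unitary_N1 _ n).
  have h0 := op_ge0 (A 1%:M - A (-1)%:M) psi hpsi.
  have hpos : 0 < opnorm (1%:M - (-1)%:M : 'M[R[i]]_n).
    apply: lt_le_trans (vnorm_double psi hpsi) _.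
    have -> : psi + psi = (1%:M - (-1)%:M) *m psi.
      by rewrite mulmxBl mul1mx mul_scalar_mx scaleN1r opprK.
    exact: (vnorm_le_op _ psi hpsi).
  have h1 := le_trans h0 h.
  by rewrite pmulr_lge0 in h1.
set D := U1 - U2.
have ak : forall U, unitary U ->
    (adjmx psi *m adjmx U *m A U *m phi) 0 0 = (adjmx (U *m psi) *m (A U *m phi)) 0 0.
  by move=> U _; rewrite adjmx_mul !mulmxA.
have hak : forall U, unitary U -> normc ((adjmx psi *m adjmx U *m A U *m phi) 0 0) <= 1.
  move=> U hU; rewrite ak //; apply: le_trans (cs_dot _ _) _.
  rewrite vnorm_unitary // hpsi mul1r -(hA1 U hU); exact: (vnorm_le_op _ phi hphi).
have M : adjmx (U1 *m psi) *m (A U1 *m phi) - adjmx (U2 *m psi) *m (A U2 *m phi)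
    = adjmx (D *m psi) *m (A U1 *m phi) + adjmx (U2 *m psi) *m ((A U1 - A U2) *m phi).
  rewrite /D mulmxBl adjmxB mulmxBl [(A U1 - A U2) *m phi]mulmxBl mulmxBr.
  by rewrite addrA subrK.
set a1 := (adjmx psi *m adjmx U1 *m A U1 *m phi) 0 0.
set a2 := (adjmx psi *m adjmx U2 *m A U2 *m phi) 0 0.
have hdiff : a1 - a2 = (adjmx (D *m psi) *m (A U1 *m phi)) 0 0
     + (adjmx (U2 *m psi) *m ((A U1 - A U2) *m phi)) 0 0.
  by rewrite /a1 /a2 !ak // -mxsubE M mxaddE.
have hd : normc (a1 - a2) <= (1 + K) * opnorm D.
  rewrite hdiff; apply: le_trans (le_normcD _ _) _.
  rewrite mulrDl mul1r; apply: lerD.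
  - apply: le_trans (cs_dot _ _) _.
    have h1 := vnorm_le_op D psi hpsi.
    have h2 := vnorm_le_op (A U1) phi hphi.
    rewrite hA1 // in h2.
    rewrite -[opnorm D]mulr1; apply: ler_pM => //; exact: vnorm_ge0.
  - apply: le_trans (cs_dot _ _) _.
    rewrite vnorm_unitary // hpsi mul1r.
    apply: le_trans (vnorm_le_op _ phi hphi) _.
    exact: hLip.
have hop := op_le_hs D psi hpsi.
have hKop : (1 + K) * opnorm D <= (1 + K) * hsnorm D.
  by apply: ler_wpM2l => //; lra.
have hn1 := hak U1 hU1. have hn2 := hak U2 hU2.
rewrite -/a1 in hn1. rewrite -/a2 in hn2.
have g1 := normc_ge0 a1. have g2 := normc_ge0 a2.
have e1 : normc a1 <= normc (a1 - a2) + normc a2.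
  by have := le_normcD (a1 - a2) a2; rewrite subrK.
have e2 : normc a2 <= normc (a1 - a2) + normc a1.
  by have := le_normcD (a2 - a1) a1; rewrite subrK -[a2 - a1]opprB normcN.
rewrite /fid -/a1 -/a2.
set n1 := normc a1 in hn1 g1 e1 e2 *.
set n2 := normc a2 in hn2 g2 e1 e2 *.
set d := normc (a1 - a2) in hd e1 e2 *.
have hF : `|n1 ^+ 2 - n2 ^+ 2| <= 2 * d.
  have p1 : 0 <= (d - (n1 - n2)) * (n1 + n2) by apply: mulr_ge0; lra.
  have p2 : 0 <= (d - (n2 - n1)) * (n1 + n2) by apply: mulr_ge0; lra.
  have p3 : 0 <= d * (2 - n1 - n2).
    apply: mulr_ge0; last lra.
    exact: normc_ge0.
  rewrite ler_norml; apply/andP; split; rewrite !expr2; lra.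
lra.
Qed.
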